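(* Let $G=(V,E)$ be a graph on $n$ vertices and $\epsilon>0$. Consider the algorithm that sets $V_1=V$, $E_1=E$ and for $i=1,\dots,n$: lets $w_i=(4/\epsilon)\sqrt{n/(n-i+1)}$, picks a vertex $v\in V_i$ with probability proportional to $d_{E_i}(v)+w_i$, outputs $v$, and sets $V_{i+1}=V_i\setminus\{v\}$ and $E_{i+1}=E_i$ minus all edges incident to $v$. From the resulting permutation of $V$, form the vertex cover consisting of, for each edge of $E$, its endpoint appearing earlier in the permutation, and let $\mathrm{ALG}(G)$ denote the size of this vertex cover. Then $$\mathbb{E}[\mathrm{ALG}(G)]\le\Big(2+2\cdot\tfrac1n\textstyle\sum_{i=1}^n w_i\Big)|\mathrm{OPT}(G)|\le(2+16/\epsilon)|\mathrm{OPT}(G)|.$$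
   Context: $d_{E_i}(v)$ is the number of edges of $E_i$ incident to $v$; $|\mathrm{OPT}(G)|$ is the size of a minimum vertex cover of $G$. *)

(* Defs.v *)
From HB Require Import structures.
From mathcomp Require Import all_boot all_order all_algebra.
Set Implicit Arguments. Unset Strict Implicit. Unset Printing Implicit Defensive.
Import Order.TTheory GRing.Theory Num.Theory.
Local Open Scope ring_scope.

Section VC.
Variables (T : finType) (e : rel T) (R : rcfType).

(* d_{E_i}(v): edges of E_i are the edges of E with both endpoints in V_i *)
Definition deg (V : {set T}) (v : T) : nat := #|[set u in V | e v u]|.

Definition wgt (eps : R) (n i : nat) : R :=
  (4 / eps) * Num.sqrt (n%:R / (n - i).+1%:R).

(* probability that the algorithm, started at step i with remaining vertex
   set V, outputs exactly the sequence s *)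
Fixpoint seq_prob (eps : R) (n : nat) (V : {set T}) (i : nat) (s : seq T) : R :=
  match s with
  | [::] => 1
  | v :: s' =>
      if v \in V then
        ((deg V v)%:R + wgt eps n i) / (\sum_(u in V) ((deg V u)%:R + wgt eps n i))
        * seq_prob eps n (V :\ v) i.+1 s'
      else 0
  end.

Definition alg_cover (s : seq T) : {set T} :=
  [set x | [exists y, e x y && (index x s < index y s)%N]].

Definition ALG (s : seq T) : nat := #|alg_cover s|.

Definition expected_ALG (eps : R) : R :=
  \sum_(s : #|T|.-tuple T) seq_prob eps #|T| [set: T] 1 s * (ALG s)%:R.

Definition is_vertex_cover (C : {set T}) : bool :=
  [forall x, forall y, e x y ==> (x \in C) || (y \in C)].

Definition OPT : nat := \big[minn/#|T|]_(C : {set T} | is_vertex_cover C) #|C|.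

End VC.

(* Main.v *)
Require Import Defs.
From HB Require Import structures.
From mathcomp Require Import all_boot all_order all_algebra.
From mathcomp Require Import ring lra zify.
Set Implicit Arguments. Unset Strict Implicit. Unset Printing Implicit Defensive.
Import Order.TTheory GRing.Theory Num.Theory.
Local Open Scope ring_scope.
Fixpoint costV (T : finType) (e : rel T) (V : {set T}) (s : seq T) : nat :=
  match s with
  | [::] => 0%N
  | v :: s' => ((0 < deg e V v)%N + costV e (V :\ v) s')%N
  end.

Definition coverIn (T : finType) (e : rel T) (V C : {set T}) : bool :=
  (C \subset V) && [forall x in V, forall y in V, e x y ==> (x \in C) || (y \in C)].

Definition optV (T : finType) (e : rel T) (V : {set T}) : nat :=
  \big[minn/#|V|]_(C : {set T} | coverIn e V C) #|C|.

Lemma optV_le (T : finType) (e : rel T) (V C : {set T}) :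
  coverIn e V C -> (optV e V <= #|C|)%N.
Proof. move=> hC; have := @bigmin_le_cond _ nat _ (#|V|) _ (coverIn e V) (fun C => #|C|) hC.
by rewrite minEnat. Qed.

Lemma optV_ex (T : finType) (e : rel T) (V : {set T}) :
  exists2 C, coverIn e V C & #|C| = optV e V.
Proof.
have hV : coverIn e V V.
  rewrite /coverIn subxx /=. apply/forall_inP => x xV. apply/forall_inP => y yV. by rewrite xV implybT.
have [C hC hE] := @eq_bigmin _ nat _ (#|V|) _ (coverIn e V) (fun C => #|C|) hV
  (fun C hC => subset_leq_card (proj1 (andP hC))).
move: hE; rewrite minEnat => hE; exists C => //; by rewrite /optV hE.
Qed.

Lemma optV_setT (T : finType) (e : rel T) : optV e [set: T] = OPT e.
Proof.
rewrite /optV /OPT cardsT; apply: eq_bigl => C.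
rewrite /coverIn subsetT /=; apply/forall_inP/forallP => h x.
  apply/forallP => y; have /forall_inP := h x (in_setT x); exact.
by move=> _; apply/forall_inP => y _; have /forallP := h x; exact.
Qed.

Lemma optV_del (T : finType) (e : rel T) (V C : {set T}) v :
  coverIn e V C -> (optV e (V :\ v) <= #|C :\ v|)%N.
Proof.
move=> /andP[sCV /forall_inP h]; apply: optV_le; apply/andP; split.
  by apply: setSD.
apply/forall_inP => x; rewrite !inE => /andP[xv xV]; apply/forall_inP => y.
rewrite !inE => /andP[yv yV]; apply/implyP => exy.
have /forall_inP := h x xV => /(_ y yV); rewrite exy /= => /orP[xC|yC].
  by rewrite xC xv.
by rewrite yC yv orbT.
Qed.

Lemma deg_sum (T : finType) (e : rel T) (V : {set T}) x :
  deg e V x = (\sum_(u in V) (e x u : nat))%N.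
Proof.
rewrite /deg -sum1_card big_mkcond [RHS]big_mkcond /=; apply: eq_bigr => u _.
by rewrite !inE; case: (u \in V); case: (e x u).
Qed.

Lemma sum_in_sub (T : finType) (V C : {set T}) (f : T -> nat) : C \subset V ->
  (\sum_(x in V) (x \in C) * f x = \sum_(x in C) f x)%N.
Proof.
move=> sCV; rewrite big_mkcond [RHS]big_mkcond /=; apply: eq_bigr => x _.
case xC: (x \in C); last by case: (x \in V).
by rewrite (subsetP sCV x xC) mul1n.
Qed.

Lemma deg_cover (T : finType) (e : rel T) (esym : symmetric e) (V C : {set T}) :
  coverIn e V C ->
  (\sum_(x in V) deg e V x <= 2 * \sum_(x in C) deg e V x)%N.
Proof.
move=> /andP[sCV /forall_inP h].
have E1 : (\sum_(x in C) deg e V x = \sum_(x in V) \sum_(y in V) (x \in C) * (e x y : nat))%N.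
  rewrite -(sum_in_sub _ sCV); apply: eq_bigr => x _; rewrite deg_sum big_distrr /=.
  by [].
have E2 : (\sum_(x in C) deg e V x = \sum_(x in V) \sum_(y in V) (y \in C) * (e x y : nat))%N.
  rewrite exchange_big /= -(sum_in_sub _ sCV); apply: eq_bigr => y _; rewrite deg_sum big_distrr /=.
  by apply: eq_bigr => x _; rewrite esym.
rewrite mul2n -addnn {1}E1 E2 -big_split /=; apply: leq_sum => x xV.
rewrite deg_sum -big_split /=; apply: leq_sum => y yV.
have /forall_inP := h x xV => /(_ y yV).
by case: (e x y); case: (x \in C); case: (y \in C).
Qed.

Lemma index_cons' (T : eqType) (v x : T) s :
  index x (v :: s) = if v == x then 0%N else (index x s).+1.
Proof. by []. Qed.

Lemma cost_alg (T : finType) (e : rel T) (eirr : irreflexive e) (s : seq T) :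
  uniq s -> costV e [set x in s] s =
    #|[set x | (x \in s) && [exists y, [&& y \in s, e x y & (index x s < index y s)%N]]]|.
Proof.
elim: s => [|v s IH] /=.
  by move=> _; apply/esym/eqP; rewrite cards_eq0; apply/eqP/setP => x; rewrite !inE.
move=> /andP[vs us].
have -> : [set x in v :: s] :\ v = [set x in s].
  apply/setP => x; rewrite !inE; case: eqP => [->|]; last by [].
  by rewrite (negbTE vs).
rewrite IH //.
set b := [exists y, (y \in s) && e v y].
have hd : (0 < deg e [set x in v :: s] v)%N = b.
  rewrite /deg card_gt0; apply/set0Pn/existsP => [[y]|[y /andP[ys evy]]].
    rewrite !inE => /andP[/orP[/eqP ->|ys] evy]; first by rewrite eirr in evy.
    by exists y; rewrite ys evy.
  by exists y; rewrite !inE ys orbT evy.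
set S' := [set x | _ && _].
have -> : [set x | (x \in v :: s) && [exists y, [&& y \in v :: s, e x y
               & (index x (v :: s) < index y (v :: s))%N]]] = if b then v |: S' else S'.
  apply/setP => x; rewrite !inE.
  case: (eqVneq x v) => [->|xv].
    rewrite /= eqxx.
    have -> : [exists y, [&& y \in v :: s, e v y & (0 < (if v == y then 0 else (index y s).+1))%N]] = b.
      apply/existsP/existsP => [[y /and3P[]]|[y /andP[ys evy]]].
        rewrite in_cons => /orP[/eqP ->|ys] evy _; first by rewrite eirr in evy.
        by exists y; rewrite ys evy.
      exists y; rewrite in_cons ys orbT evy /=.
      by case: eqP => // vy; rewrite vy ys in vs.
    by case: (b); rewrite ?inE ?eqxx // (negbTE vs).
  have -> : (x \in (if b then v |: S' else S')) = (x \in S').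
    by case: (b); rewrite // !inE (negbTE xv).
  rewrite /S' !inE /= eq_sym (negbTE xv).
  case xs: (x \in s) => //=.
  apply/existsP/existsP => [[y /and3P[]]|[y /and3P[ys exy hi]]].
    rewrite in_cons => /orP[/eqP ->|ys] exy hi.
      by rewrite eqxx in hi.
    exists y; rewrite ys exy /=; move: hi.
    by case: eqP => [vy|_]; [rewrite vy ys in vs|].
  exists y; rewrite in_cons ys orbT exy /=.
  by case: eqP => [vy|_]; [rewrite vy ys in vs|].
rewrite hd; case: (b) => //=.
by rewrite cardsU1 !inE (negbTE vs).
Qed.
Definition FV (R : rcfType) (T : finType) (e : rel T) (V : {set T}) : R :=
  if (2 * optV e V <= #|V|)%N then (optV e V)%:R else #|V|%:R / 2.
Definition Hn (R : rcfType) (eps : R) (n m : nat) : R :=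
  2 * m%:R + 2 * \sum_(n.+1 - m <= j < n.+1) wgt eps n j.
Definition Psi (R : rcfType) (T : finType) (e : rel T) (eps : R) (n : nat) (V : {set T}) : R :=
  FV R e V * Hn eps n #|V| / #|V|%:R.

Lemma wgt_ge0 (R : rcfType) (eps : R) n i : 0 < eps -> 0 <= wgt eps n i.
Proof. by move=> he; rewrite /wgt mulr_ge0 ?sqrtr_ge0 // divr_ge0 // ltW. Qed.

Lemma wgt_gt0 (R : rcfType) (eps : R) n i : 0 < eps -> (0 < n)%N -> 0 < wgt eps n i.
Proof.
move=> he hn; rewrite /wgt mulr_gt0 ?divr_gt0 //.
by rewrite sqrtr_gt0 divr_gt0 // ltr0n.
Qed.

Lemma wgt_mono (R : rcfType) (eps : R) n j j' : 0 < eps -> (j <= j')%N ->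
  wgt eps n j <= wgt eps n j'.
Proof.
move=> he hj; rewrite /wgt ler_pM2l ?divr_gt0 // ler_sqrt; last first.
  by rewrite divr_ge0.
rewrite ler_wpM2l // lef_pV2 ?posrE ?ltr0n // ler_nat ltnS.
exact: leq_sub2l.
Qed.

Lemma Hn_rec (R : rcfType) (eps : R) n m : (1 <= m)%N -> (m <= n.+1)%N ->
  Hn eps n m = Hn eps n m.-1 + 2 + 2 * wgt eps n (n.+1 - m).
Proof.
move=> h1 h2; rewrite /Hn big_ltn; last by lia.
have -> : (n.+1 - m.-1 = (n.+1 - m).+1)%N by lia.
rewrite -{1}(prednK h1) -addn1 natrD; ring.
Qed.

Lemma Hn0 (R : rcfType) (eps : R) n : Hn eps n 0 = 0.
Proof. by rewrite /Hn subn0 big_geq // mulr0 addr0. Qed.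

Lemma Hn_ge (R : rcfType) (eps : R) n m : 0 < eps -> (1 <= m)%N -> (m <= n.+1)%N ->
  (2 + 2 * wgt eps n (n.+1 - m)) * (m.-1)%:R <= Hn eps n m.-1.
Proof.
move=> he h1 h2; rewrite /Hn mulrDl; apply: lerD; first by rewrite mulrC.
have -> : (n.+1 - m.-1 = (n.+1 - m).+1)%N by lia.
rewrite -mulrA ler_wpM2l //.
have -> : (m.-1)%:R = \sum_((n.+1 - m).+1 <= j < n.+1) (1 : R).
  by rewrite sumr_const_nat; congr (_%:R); lia.
rewrite mulr_sumr; apply: ler_sum_nat => j /andP[hj _]; rewrite mulr1.
by apply: wgt_mono => //; apply: ltnW.
Qed.

Lemma FV_ge0 (R : rcfType) (T : finType) (e : rel T) V : 0 <= FV R e V.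
Proof. by rewrite /FV; case: ifP => _; rewrite ?divr_ge0. Qed.

Lemma FV_le_opt (R : rcfType) (T : finType) (e : rel T) V : FV R e V <= (optV e V)%:R.
Proof.
rewrite /FV; case: ifP => // /negbT; rewrite -ltnNge => h.
rewrite ler_pdivrMr // -natrM ler_nat mulnC; exact: ltnW.
Qed.

Lemma FV_le_half (R : rcfType) (T : finType) (e : rel T) V : FV R e V <= #|V|%:R / 2.
Proof.
rewrite /FV; case: ifP => // h.
by rewrite ler_pdivlMr // -natrM ler_nat mulnC.
Qed.

Lemma sum_in_subR (R : rcfType) (T : finType) (V C : {set T}) (f : T -> R) : C \subset V ->
  \sum_(x in V) (x \in C)%:R * f x = \sum_(x in C) f x.
Proof.
move=> sCV; rewrite big_mkcond [RHS]big_mkcond /=; apply: eq_bigr => x _.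
case xC: (x \in C); last by case: (x \in V); rewrite ?mul0r.
by rewrite (subsetP sCV x xC) mul1r.
Qed.

Lemma step (R : rcfType) (T : finType) (e : rel T) (esym : symmetric e)
  (eps : R) (n : nat) (V : {set T}) (i : nat) :
  0 < eps -> (0 < n)%N -> (i + #|V| = n.+1)%N -> (0 < #|V|)%N ->
  \sum_(v in V) ((deg e V v)%:R + wgt eps n i) /
                (\sum_(u in V) ((deg e V u)%:R + wgt eps n i)) *
     (((0 < deg e V v)%N)%:R + Psi e eps n (V :\ v)) <= Psi e eps n V.
Proof.
move=> he hn hi hm.
set w := wgt eps n i.
set d := fun v => (deg e V v)%:R : R.
set Z := \sum_(u in V) (d u + w).
set m := #|V|.
set D := \sum_(u in V) d u.
have wpos : 0 < w by apply: wgt_gt0.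
have dv0 : forall v, 0 <= d v by move=> v; rewrite /d ler0n.
have pv0 : forall v, 0 <= d v + w by move=> v; rewrite addr_ge0 ?dv0 // ltW.
have hZ : Z = D + m%:R * w by rewrite /Z big_split /= sumr_const mulr_natl.
have D0 : 0 <= D by apply: sumr_ge0 => u _; rewrite /d ler0n.
have Zpos : 0 < Z by rewrite hZ; apply: ltr_pwDr => //; rewrite mulr_gt0 // ltr0n.
have P1 : \sum_(v in V) (d v + w) / Z = 1.
  by rewrite -mulr_suml divff // gt_eqF.
set F := FV R e V.
set delta := \sum_(v in V) (d v + w) / Z * (F - FV R e (V :\ v)).
set cost := \sum_(v in V) (d v + w) / Z * ((0 < deg e V v)%N)%:R.
have hcost : cost <= (1 + w) * D / Z.
  rewrite /cost /D mulr_sumr mulr_suml; apply: ler_sum => v _.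
  rewrite mulrAC ler_pM2r ?invr_gt0 //.
  rewrite /d; case: (deg e V v) => [|k] /=; first by rewrite mulr0 mulr0.
  rewrite mulr1 mulrDl mul1r lerD2l -[X in X <= _]mulr1 ler_pM2l //.
  by rewrite ler1n.
have D_le_Z : D <= Z by rewrite hZ lerDl mulr_ge0 // ltW.
have [hA hB] : cost <= (2 + 2 * w) * delta /\ F <= m%:R * delta.
  case: (boolP (2 * optV e V <= m)%N) => hc.
  - have FE : F = (optV e V)%:R by rewrite /F /FV hc.
    have [C hC hCc] := optV_ex e V.
    have sCV : C \subset V by case/andP: hC.
    set SC := \sum_(v in C) d v.
    have hDSC : D <= 2 * SC.
      rewrite /D /SC /d -!natr_sum -natrM ler_nat; exact: deg_cover.
    have SC0 : 0 <= SC by apply: sumr_ge0 => u _; rewrite /d ler0n.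
    have hdel : (SC + (optV e V)%:R * w) / Z <= delta.
      have -> : SC + (optV e V)%:R * w = \sum_(v in C) (d v + w).
        by rewrite big_split /= sumr_const hCc mulr_natl.
      rewrite mulr_suml -(sum_in_subR _ sCV); apply: ler_sum => v vV.
      rewrite mulrC; apply: ler_wpM2l; first by rewrite divr_ge0 ?pv0 // ltW.
      rewrite FE; have := optV_del v hC; rewrite -hCc (cardsD1 v C).
      case: (v \in C) => /= hle.
        have : FV R e (V :\ v) <= #|C :\ v|%:R.
          by apply: le_trans (FV_le_opt _ _ _) _; rewrite ler_nat.
        rewrite natrD; lra.
      by rewrite subr_ge0; apply: le_trans (FV_le_opt _ _ _) _; rewrite ler_nat add0n.
    split.
    + apply: le_trans hcost _; apply: le_trans _ (ler_wpM2l _ hdel); last first.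
        by rewrite addr_ge0 // mulr_ge0 // ltW.
      rewrite [X in _ <= X]mulrA ler_pM2r ?invr_gt0 //.
      have w0 : 0 <= 1 + w by rewrite addr_ge0 // ltW.
      apply: le_trans (ler_wpM2l w0 hDSC) _.
      have -> : (1 + w) * (2 * SC) = (2 + 2 * w) * SC by ring.
      apply: ler_wpM2l; first by rewrite addr_ge0 // mulr_ge0 // ltW.
      by rewrite lerDl mulr_ge0 ?ler0n // ltW.
    + apply: le_trans _ (ler_wpM2l (ler0n R m) hdel).
      rewrite FE mulrA ler_pdivlMr // hZ.
      have hc' : 2 * (optV e V)%:R <= m%:R :> R by rewrite -(natrM R 2) ler_nat.
      have : 0 <= (optV e V)%:R :> R by rewrite ler0n.
      nra.
  - have FE : F = m%:R / 2 by rewrite /F /FV (negbTE hc).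
    have hdel : 1 / 2 <= delta.
      have -> : 1 / 2 = \sum_(v in V) (d v + w) / Z * (1 / 2) :> R.
        by rewrite -mulr_suml P1 !mul1r.
      rewrite /delta; apply: ler_sum => v vV.
      apply: ler_wpM2l; first by rewrite divr_ge0 ?pv0 // ltW.
      have h := FV_le_half R e (V :\ v).
      rewrite FE; have -> : (m = 1 + #|V :\ v|)%N by rewrite /m (cardsD1 v V) vV.
      rewrite natrD; lra.
    split.
    + apply: le_trans hcost _.
      have h1 : (1 + w) * D / Z <= 1 + w.
        rewrite ler_pdivrMr // ler_pM2l //; lra.
      apply: le_trans h1 _.
      have -> : 1 + w = (2 + 2 * w) * (1 / 2) by field.
      by apply: ler_wpM2l => //; rewrite addr_ge0 // mulr_ge0 // ltW.
    + rewrite FE; have -> : m%:R / 2 = m%:R * (1 / 2) :> R by rewrite mul1r.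
      by apply: ler_wpM2l => //; rewrite ler0n.
set q := Hn eps n m.-1 / (m.-1)%:R.
have hcard : forall v, v \in V -> #|V :\ v| = m.-1.
  by move=> v vV; rewrite /m (cardsD1 v V) vV.
have hsplit : \sum_(v in V) (d v + w) / Z * (((0 < deg e V v)%N)%:R + Psi e eps n (V :\ v))
    = cost + q * (F - delta).
  rewrite /cost /delta.
  under eq_bigr => v vV do rewrite mulrDr /Psi (hcard v vV) -/q.
  rewrite big_split /=; congr (_ + _).
  under [X in _ = _ * (_ - X)]eq_bigr => v _ do rewrite mulrBr.
  rewrite sumrB -mulr_suml P1 mul1r opprB addrC subrK mulr_sumr.
  by apply: eq_bigr => v _; rewrite /q; ring.
rewrite hsplit /Psi -/m -/F.
have iE : i = (n.+1 - m)%N by rewrite /m; lia.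
have mn : (m <= n.+1)%N by rewrite /m; lia.
rewrite (Hn_rec eps hm mn) -iE -/w.
have F0 : 0 <= F by apply: FV_ge0.
have dF : delta <= F.
  rewrite /delta.
  under eq_bigr => v _ do rewrite mulrBr.
  rewrite sumrB -mulr_suml P1 mul1r lerBlDr lerDl.
  by apply: sumr_ge0 => v _; rewrite mulr_ge0 ?FV_ge0 // divr_ge0 ?pv0 // ltW.
case: (ltnP 1 m) => hm2.
- have hq : 2 + 2 * w <= q.
    rewrite /q ler_pdivlMr ?ltr0n; last by lia.
    have := Hn_ge he hm mn; by rewrite -iE -/w.
  have hqm : q * (m.-1)%:R = Hn eps n m.-1.
    by rewrite /q divfK // pnatr_eq0 -lt0n; lia.
  have mE : m%:R = (m.-1)%:R + 1 :> R by rewrite natr1 prednK //; lia.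
  rewrite -hqm ler_pdivlMr ?ltr0n //.
  have h1 := mulr_ge0 (_ : 0 <= q - (2 + 2 * w)) (_ : 0 <= m%:R * delta - F).
  have h2 : cost * m%:R <= (2 + 2 * w) * delta * m%:R by apply: ler_wpM2r; rewrite ?ler0n.
  rewrite mE in h1 h2 hB *.
  have m0 : 0 <= (m.-1)%:R :> R by rewrite ler0n.
  nra.
- have m1 : m = 1%N by lia.
  rewrite /q m1 /= invr0 mulr0 mul0r addr0 divr1 -/m m1 Hn0 add0r.
  apply: le_trans hA _; rewrite mulrC; apply: ler_wpM2r => //.
  by rewrite addr_ge0 // mulr_ge0 // ltW.
Qed.
Lemma big_tuple_cons (R : nmodType) (T : finType) k (F : k.+1.-tuple T -> R) :
  \sum_(s : k.+1.-tuple T) F s = \sum_(v : T) \sum_(t : k.-tuple T) F [tuple of v :: t].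
Proof.
rewrite pair_big /=.
rewrite (reindex (fun p : T * k.-tuple T => [tuple of p.1 :: p.2])) //=.
exists (fun s : k.+1.-tuple T => (thead s, [tuple of behead s])) => [[v t]|s] _ /=.
  by congr (_, _); apply: val_inj.
by apply: val_inj => /=; rewrite [in RHS](tuple_eta s).
Qed.

Lemma Z_pos (R : rcfType) (T : finType) (e : rel T) (eps : R) n (V : {set T}) i :
  0 < eps -> (0 < n)%N -> (0 < #|V|)%N ->
  0 < \sum_(u in V) ((deg e V u)%:R + wgt eps n i).
Proof.
move=> he hn hV; apply: (@lt_le_trans _ _ (\sum_(u in V) wgt eps n i)).
  by rewrite sumr_const -mulr_natl mulr_gt0 ?ltr0n ?wgt_gt0.
by apply: ler_sum => u _; rewrite lerDr ler0n.
Qed.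

Lemma sum_prob (R : rcfType) (T : finType) (e : rel T) (eps : R) n :
  0 < eps -> (0 < n)%N -> forall k (V : {set T}) i, #|V| = k ->
  \sum_(s : k.-tuple T) seq_prob e eps n V i s = 1.
Proof.
move=> he hn; elim=> [|k IH] V i hV.
  rewrite (eq_bigr (fun _ => 1)); last by move=> s _; rewrite tuple0.
  by rewrite sumr_const card_tuple expn0.
rewrite big_tuple_cons /=.
have hV0 : (0 < #|V|)%N by rewrite hV.
rewrite (eq_bigr (fun v => if v \in V then ((deg e V v)%:R + wgt eps n i) /
            (\sum_(u in V) ((deg e V u)%:R + wgt eps n i)) else 0)); last first.
  move=> v _; case: ifP => vV; last by rewrite big1.
  rewrite -mulr_sumr IH ?mulr1 //.
  by move: hV; rewrite (cardsD1 v V) vV => -[].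
rewrite -big_mkcond /= -mulr_suml divff // gt_eqF //; exact: Z_pos.
Qed.

Lemma main_ind (R : rcfType) (T : finType) (e : rel T) (esym : symmetric e) (eps : R) n :
  0 < eps -> forall k (V : {set T}) i, #|V| = k -> (0 < i)%N -> (i + k = n.+1)%N ->
  \sum_(s : k.-tuple T) seq_prob e eps n V i s * (costV e V s)%:R <= Psi e eps n V.
Proof.
move=> he; elim=> [|k IH] V i hV hi0 hik.
  rewrite (eq_bigr (fun _ => 0)); last by move=> s _; rewrite tuple0 /= mulr0.
  by rewrite big1 // /Psi hV invr0 mulr0.
have hn : (0 < n)%N by lia.
have hV0 : (0 < #|V|)%N by rewrite hV.
rewrite big_tuple_cons /=.
set Z := \sum_(u in V) ((deg e V u)%:R + wgt eps n i).
apply: (@le_trans _ _ (\sum_(v : T) if v \in V then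
   ((deg e V v)%:R + wgt eps n i) / Z *
     (((0 < deg e V v)%N)%:R + Psi e eps n (V :\ v)) else 0)); last first.
  have hiV : (i + #|V| = n.+1)%N by rewrite hV.
  by move: (@step R T e esym eps n V i he hn hiV hV0); rewrite big_mkcond /=.
apply: ler_sum => v _; case: ifP => vV; last first.
  by rewrite big1 // => t _; rewrite mul0r.
have hVv : #|V :\ v| = k by move: hV; rewrite (cardsD1 v V) vV => -[].
set p := ((deg e V v)%:R + wgt eps n i) / Z.
have p0 : 0 <= p.
  by rewrite divr_ge0 ?addr_ge0 ?ler0n ?wgt_ge0 // ltW // Z_pos.
under eq_bigr => t _ do rewrite natrD mulrDr.
rewrite big_split /= mulrDr; apply: lerD.
  under eq_bigr => t _ do rewrite -mulrA mulrC.
  by rewrite -mulr_suml -mulr_suml sum_prob // mul1r mulrC.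
under eq_bigr => t _ do rewrite -mulrA.
rewrite -mulr_sumr; apply: ler_wpM2l => //.
by apply: IH => //; lia.
Qed.

Lemma sp_support (R : rcfType) (T : finType) (e : rel T) (eps : R) n :
  forall (s : seq T) (V : {set T}) i, seq_prob e eps n V i s != 0 ->
  uniq s && all (fun x => x \in V) s.
Proof.
elim=> [|v s IH] V i //=.
case: ifP => vV; last by rewrite eqxx.
rewrite mulf_eq0 negb_or => /andP[_ /IH /andP[us hsV]].
have vs : v \notin s.
  by apply/negP => /(allP hsV); rewrite !inE eqxx.
rewrite vs us /=; apply/allP => x /(allP hsV); rewrite !inE => /andP[_ ->].
by [].
Qed.

Lemma ALG_cost (T : finType) (e : rel T) (eirr : irreflexive e) (s : seq T) :
  uniq s -> size s = #|T| -> ALG e s = costV e [set: T] s.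
Proof.
move=> us hs.
have hall : forall x, x \in s.
  have : #|s| = #|T| by rewrite (card_uniqP us).
  move=> hc x; have /subset_cardP := hc.
  by move=> /(_ (subset_predT _)) => /(_ x); rewrite !inE.
have -> : [set: T] = [set x in s] by apply/setP => x; rewrite !inE hall.
rewrite cost_alg // /ALG /alg_cover; apply: eq_card => x; rewrite !inE hall /=.
apply/existsP/existsP => [[y /andP[h1 h2]]|[y /and3P[_ h1 h2]]]; exists y.
  by rewrite hall h1.
by rewrite h1.
Qed.

Lemma sqrt_sum (R : rcfType) n : forall k, (k <= n)%N ->
  \sum_(n.+1 - k <= j < n.+1) Num.sqrt (n%:R / (n - j).+1%:R : R) <=
  2 * Num.sqrt (n%:R * k%:R).
Proof.
elim=> [|k IH] hk.
  by rewrite subn0 big_geq // mulr0 sqrtr0 mulr0.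
rewrite big_ltn; last by lia.
have -> : ((n.+1 - k.+1).+1 = n.+1 - k)%N by lia.
have -> : ((n - (n.+1 - k.+1)).+1 = k.+1)%N by lia.
apply: le_trans (lerD (lexx _) (IH (ltnW hk))) _.
have n0 : 0 <= n%:R :> R by rewrite ler0n.
rewrite !sqrtrM // sqrtrV ?ler0n //.
set s := Num.sqrt (n%:R : R).
set a := Num.sqrt (k%:R : R).
set b := Num.sqrt (k.+1%:R : R).
have s0 : 0 <= s by apply: sqrtr_ge0.
have a0 : 0 <= a by apply: sqrtr_ge0.
have b0 : 0 < b by rewrite sqrtr_gt0 ltr0n.
have ha : a ^+ 2 = k%:R by rewrite sqr_sqrtr ?ler0n.
have hb : b ^+ 2 = k%:R + 1 by rewrite sqr_sqrtr ?ler0n // -natr1.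
have key : b^-1 + 2 * a <= 2 * b.
  rewrite -(ler_pM2r b0) mulrDl mulVf ?gt_eqF //.
  have : 0 <= (a - b) ^+ 2 by apply: sqr_ge0.
  rewrite !expr2 in ha hb *; nra.
have := ler_wpM2l s0 key; rewrite mulrDr; nra.
Qed.

Lemma avg_bound (R : rcfType) (eps : R) n : 0 < eps ->
  n%:R^-1 * \sum_(1 <= i < n.+1) wgt eps n i <= 8 / eps.
Proof.
move=> he; case: n => [|n]; first by rewrite invr0 mul0r divr_ge0 // ltW.
have := sqrt_sum R (leqnn n.+1); rewrite subSnn.
rewrite sqrtrM ?ler0n // -expr2 sqr_sqrtr ?ler0n // => h.
rewrite /wgt -mulr_sumr.
set S := \sum_(_ <= _ < _) _ in h *.
have N0 : 0 < n.+1%:R :> R by rewrite ltr0n.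
apply: (@le_trans _ _ (n.+1%:R^-1 * (4 / eps * (2 * n.+1%:R)))).
  apply: ler_wpM2l; first by rewrite invr_ge0 ltW.
  by apply: ler_wpM2l => //; rewrite divr_ge0 // ltW.
rewrite le_eqVlt; apply/orP; left; apply/eqP; field.
have h1 : 0 < 1 + n%:R :> R by rewrite addrC natr1 ltr0n.
by rewrite !gt_eqF.
Qed.

Theorem mainTheorem7 (R : rcfType) (T : finType) (e : rel T)
    (esym : symmetric e) (eirr : irreflexive e) (eps : R) (heps : 0 < eps) :
  let n := #|T| in
  expected_ALG e eps <=
    (2 + 2 * (n%:R^-1 * \sum_(1 <= i < n.+1) wgt eps n i)) * (OPT e)%:R
  /\ (2 + 2 * (n%:R^-1 * \sum_(1 <= i < n.+1) wgt eps n i)) * (OPT e)%:R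
     <= (2 + 16 / eps) * (OPT e)%:R.
Proof.
rewrite /=.
have A0 : 0 <= #|T|%:R^-1 * \sum_(1 <= i < #|T|.+1) wgt eps #|T| i.
  by rewrite mulr_ge0 ?invr_ge0 ?ler0n // sumr_ge0 // => i _; apply: wgt_ge0.
have O0 : 0 <= (OPT e)%:R :> R by rewrite ler0n.
split; last first.
  apply: ler_wpM2r => //; rewrite lerD2l.
  have -> : 16 / eps = 2 * (8 / eps) :> R by field; rewrite gt_eqF.
  by apply: ler_wpM2l => //; apply: avg_bound.
have E : expected_ALG e eps = \sum_(s : #|T|.-tuple T)
    seq_prob e eps #|T| [set: T] 1 s * (costV e [set: T] s)%:R.
  rewrite /expected_ALG; apply: eq_bigr => s _.
  case: (eqVneq (seq_prob e eps #|T| [set: T] 1 s) 0) => [->|h]; first by rewrite !mul0r.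
  have /andP[us _] := sp_support h.
  by rewrite ALG_cost // size_tuple.
rewrite E; apply: le_trans (@main_ind R T e esym eps #|T| heps #|T| [set: T] 1 (cardsT T) isT _) _.
  by rewrite add1n.
rewrite /Psi cardsT.
case: (posnP #|T|) => hT.
  rewrite [in X in X <= _]hT invr0 mulr0.
  by rewrite mulr_ge0 // addr_ge0 // mulr_ge0.
have HE : Hn eps #|T| #|T| / #|T|%:R =
    2 + 2 * (#|T|%:R^-1 * \sum_(1 <= i < #|T|.+1) wgt eps #|T| i).
  rewrite /Hn subSnn; field; by rewrite pnatr_eq0 -lt0n.
rewrite -mulrA HE mulrC; apply: ler_wpM2l; first by rewrite addr_ge0 // mulr_ge0.
by rewrite -optV_setT; apply: FV_le_opt.
Qed.
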